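(* Let $D=\mathrm{diag}(d_1,\dots,d_n)\in\mathbb{D}^n_+$, $W\in\mathbb{R}^{n\times n}$, $u\in\mathbb{R}^n$, $A:=W-D$ with rows $A_i^\top$, $\mathcal X=\{x\in\mathbb{R}^n: Dx\in[0,1]^n\}$, $\Lambda=\mathrm{diag}(\lambda_1,\dots,\lambda_n)\in\mathbb{D}^n_+$, and $$V_\infty(x)=\max_{\zeta\in\{0,1\}^n}(Ax+u)^\top\Lambda(\zeta-Dx).$$ Then: (i) for every $x\in\mathcal X$, $V_\infty(x)=\sum_{i=1}^n\lambda_i\big((A_i^\top x+u_i)_+(1-d_ix_i)+(A_i^\top x+u_i)_-d_ix_i\big)=\sum_{i=1}^n\lambda_i\big((A_i^\top x+u_i)_+-d_i(A_i^\top x+u_i)x_i\big)$; (ii) $V_\infty$ is globally Lipschitz on $\mathcal X$ and $V_\infty(x)\ge0$ for all $x\in\mathcal X$; (iii) for $x\in\mathcal X$, $V_\infty(x)=0$ if and only if $x$ is an equilibrium of the hard-selector inclusion $x'\in-Dx+\mathcal H(Ax+u)$; in particular, if $A$ is Lyapunov diagonally stable (with $\Lambda$ a diagonal certificate), then $V_\infty$ is positive definite on $\mathcal X$ with respect to the unique equilibrium $x^\star$.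
   Context: $\mathbb{D}^n_+$ is the set of positive diagonal matrices. $(z)_+=\max(0,z)$, $(z)_-=-\min(0,z)$. $h(z)=\{0\}$ if $z<0$, $[0,1]$ if $z=0$, $\{1\}$ if $z>0$, and $\mathcal H(x)=h(x_1)\times\cdots\times h(x_n)$; an equilibrium of the inclusion is $x$ with $0\in-Dx+\mathcal H(Ax+u)$. A matrix $A$ is Lyapunov diagonally stable with diagonal certificate $\Lambda\in\mathbb{D}^n_+$ if $A^\top\Lambda+\Lambda A\prec0$; in the paper $\Lambda$ in $V_\infty$ is taken to be this certificate. *)

(* Defs.v *)
From mathcomp Require Import all_boot all_order all_algebra.
Set Implicit Arguments. Unset Strict Implicit. Unset Printing Implicit Defensive.
Import Order.TTheory GRing.Theory Num.Theory.
Local Open Scope ring_scope.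

Definition Dmx (R : realFieldType) (n : nat) (d : 'I_n -> R) : 'M[R]_n :=
  diag_mx (\row_i d i).

Definition ppart (R : realFieldType) (z : R) : R := Num.max 0 z.
Definition npart (R : realFieldType) (z : R) : R := - Num.min 0 z.

Definition zcol (R : realFieldType) (n : nat) (z : {ffun 'I_n -> bool}) : 'cV[R]_n :=
  \col_i (z i)%:R.

(* V_infty(x) = max_{zeta in {0,1}^n} (Ax+u)^T Lambda (zeta - D x),  A = W - D.
   The max over the (nonempty) finite set {0,1}^n is written as an iterated
   Num.max seeded with the value at zeta = 0. *)
Definition Vinf (R : realFieldType) (n : nat) (W : 'M[R]_n) (d lam : 'I_n -> R)
    (u x : 'cV[R]_n) : R :=
  let A := W - Dmx d in
  let f := fun z : {ffun 'I_n -> bool} =>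
    ((A *m x + u)^T *m Dmx lam *m (zcol R z - Dmx d *m x)) 0 0 in
  \big[Num.max/f [ffun=> false]]_(z : {ffun 'I_n -> bool}) f z.

Definition inX (R : realFieldType) (n : nat) (d : 'I_n -> R) (x : 'cV[R]_n) : Prop :=
  forall i, 0 <= d i * x i 0 <= 1.

Definition in_h (R : realFieldType) (z y : R) : Prop :=
  (z < 0 -> y = 0) /\ (z = 0 -> 0 <= y <= 1) /\ (0 < z -> y = 1).

Definition equilibrium (R : realFieldType) (n : nat) (W : 'M[R]_n) (d : 'I_n -> R)
    (u x : 'cV[R]_n) : Prop :=
  exists h : 'cV[R]_n,
    (forall i, in_h (((W - Dmx d) *m x + u) i 0) (h i 0)) /\
    (0 : 'cV[R]_n) = - (Dmx d *m x) + h.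

(* f is globally Lipschitz on the set P (w.r.t. the l1 norm on R^n;
   all norms on R^n are equivalent) *)
Definition lipschitz_on (R : realFieldType) (n : nat) (P : 'cV[R]_n -> Prop)
    (f : 'cV[R]_n -> R) : Prop :=
  exists L : R, 0 <= L /\
    forall x y, P x -> P y -> `|f x - f y| <= L * \sum_i `|x i 0 - y i 0|.

Definition LDS_cert (R : realFieldType) (n : nat) (A : 'M[R]_n) (lam : 'I_n -> R) : Prop :=
  forall v : 'cV[R]_n, v != 0 -> (v^T *m (A^T *m Dmx lam + Dmx lam *m A) *m v) 0 0 < 0.

(* Main.v *)
Require Import Defs.
From mathcomp Require Import all_boot all_order all_algebra.
From mathcomp Require Import ring lra.
Import Order.TTheory GRing.Theory Num.Theory.
Local Open Scope ring_scope.

Set Implicit Arguments. Unset Strict Implicit. Unset Printing Implicit Defensive.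



Section Helpers.
Variable R : realFieldType.

Lemma ppartE (z : R) : ppart z = if 0 <= z then z else 0.
Proof. by rewrite /ppart; case: (lerP 0 z). Qed.

Lemma npartE (z : R) : npart z = if 0 <= z then 0 else - z.
Proof. by rewrite /npart; case: (lerP 0 z); rewrite ?oppr0. Qed.

Lemma ppart_npart (z : R) : ppart z - npart z = z.
Proof. rewrite ppartE npartE; case: ifP => _; rewrite ?opprK; ring. Qed.

Lemma ppart_ge0 (z : R) : 0 <= ppart z.
Proof. rewrite ppartE; case: ifP => //; by move=> ->. Qed.

Lemma npart_ge0 (z : R) : 0 <= npart z.
Proof. rewrite npartE; case: ifP => // /negbT; rewrite -ltNge oppr_ge0 => h; exact: ltW. Qed.

Lemma ppart_lip (a b : R) : `|ppart a - ppart b| <= `|a - b|.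
Proof.
rewrite !ppartE; case: (lerP 0 a) => ha; case: (lerP 0 b) => hb.
- done.
- rewrite subr0 (ger0_norm ha) ger0_norm; lra.
- rewrite sub0r normrN; rewrite ger0_norm // ler0_norm; lra.
- by rewrite subr0 normr0.
Qed.

Lemma Dmx_mul (n : nat) (d : 'I_n -> R) (x : 'cV[R]_n) i :
  (Dmx d *m x) i 0 = d i * x i 0.
Proof. by rewrite /Dmx mul_diag_mx !mxE. Qed.

Lemma quadD (n : nat) (lam : 'I_n -> R) (a b : 'cV[R]_n) :
  (a^T *m Dmx lam *m b) 0 0 = \sum_i a i 0 * lam i * b i 0.
Proof. rewrite /Dmx mul_mx_diag !mxE; apply: eq_bigr => i _; by rewrite !mxE. Qed.

Lemma le_sum_term (I : finType) (F : I -> R) i : (forall j, 0 <= F j) -> F i <= \sum_j F j.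
Proof. move=> h; rewrite (bigD1 i) //= lerDl sumr_ge0 //. Qed.

Lemma maxr_gel (x y : R) : x <= Num.max x y.
Proof. by case: (lerP x y). Qed.
Lemma maxr_ger (x y : R) : y <= Num.max x y.
Proof. case: (lerP x y) => // h; exact: ltW. Qed.
Lemma maxr_leP (x y M : R) : x <= M -> y <= M -> Num.max x y <= M.
Proof. by case: (lerP x y). Qed.

Lemma bigmax_ge (T : finType) (F : T -> R) x0 t : F t <= \big[Num.max/x0]_(z : T) F z.
Proof.
have : t \in index_enum T by rewrite mem_index_enum.
elim: (index_enum T) => //= a r IH; rewrite inE => /orP [/eqP <-|h].
- by rewrite big_cons maxr_gel.
- rewrite big_cons; exact: le_trans (IH h) (maxr_ger _ _).
Qed.

Lemma bigmax_le (T : finType) (F : T -> R) x0 M :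
  x0 <= M -> (forall z, F z <= M) -> \big[Num.max/x0]_(z : T) F z <= M.
Proof. move=> h0 h; elim/big_ind: _ => // a b ha hb; exact: maxr_leP. Qed.

End Helpers.



Section Vf.
Variables (R : realFieldType) (n : nat) (d : 'I_n -> R) (W : 'M[R]_n)
    (u : 'cV[R]_n) (lam : 'I_n -> R).
Hypothesis hlam : forall i, 0 < lam i.

Lemma zb_le (z : R) (b : bool) : z * b%:R <= ppart z.
Proof. rewrite ppartE; case: b => /=; rewrite ?mulr1 ?mulr0; case: (lerP 0 z) => h; lra. Qed.

Lemma zb_eq (z : R) : z * (0 < z)%R%:R = ppart z.
Proof. rewrite ppartE; case: (ltrgtP 0 z) => h /=; rewrite ?mulr1 ?mulr0; lra. Qed.

Lemma Vinf_formula x : Vinf W d lam u x =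
  \sum_i lam i * (ppart (((W - Dmx d) *m x + u) i 0)
                  - d i * ((W - Dmx d) *m x + u) i 0 * x i 0).
Proof.
rewrite /Vinf /=. set z := (W - Dmx d) *m x + u.
have fE : forall zt : {ffun 'I_n -> bool},
  (z^T *m Dmx lam *m (zcol R zt - Dmx d *m x)) 0 0
  = \sum_i lam i * (z i 0 * (zt i)%:R - d i * z i 0 * x i 0).
  move=> zt; rewrite quadD; apply: eq_bigr => i _.
  rewrite [(zcol R zt - _) i 0]mxE [zcol R zt i 0]mxE [(- (Dmx d *m x)) i 0]mxE Dmx_mul; ring.
have fle : forall zt : {ffun 'I_n -> bool},
  (z^T *m Dmx lam *m (zcol R zt - Dmx d *m x)) 0 0 <=
  \sum_i lam i * (ppart (z i 0) - d i * z i 0 * x i 0).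
  move=> zt; rewrite fE; apply: ler_sum => i _; rewrite ler_pM2l // lerD2r; exact: zb_le.
apply/eqP; rewrite eq_le; apply/andP; split.
  by apply: bigmax_le.
apply: le_trans (bigmax_ge _ _ [ffun i => 0 < z i 0]).
rewrite fE; under [X in _ <= X]eq_bigr => i _ do rewrite ffunE zb_eq.
by [].
Qed.

End Vf.



Lemma mxBE (R : realFieldType) m p (a b : 'M[R]_(m, p)) i j : (a - b) i j = a i j - b i j.
Proof. by rewrite !mxE. Qed.

Definition box (R : realFieldType) (y zv : R) :=
  0 <= y <= 1 /\ (zv < 0 -> y = 0) /\ (0 < zv -> y = 1).

Lemma box_mono (R : realFieldType) (a b za zb : R) :
  box a za -> box b zb -> 0 <= (a - b) * (za - zb).
Proof.
move=> [/andP [a0 a1] [ha1 ha2]] [/andP [b0 b1] [hb1 hb2]].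
case: (ltrgtP za zb) => h.
- have : a <= b.
    case: (ltrP 0 zb) => hz; first by rewrite hb2 //.
    rewrite ha1 //; exact: lt_le_trans h hz.
  move=> hab; apply: mulr_le0; lra.
- have : b <= a.
    case: (ltrP 0 za) => hz; first by rewrite ha2 //.
    rewrite hb1 //; exact: lt_le_trans h hz.
  move=> hab; apply: mulr_ge0; lra.
- by rewrite h subrr mulr0.
Qed.

Section Exist.
Variables (R : realFieldType) (n : nat) (A : 'M[R]_n) (d : 'I_n -> R) (u : 'cV[R]_n).
Hypothesis hd : forall i, 0 < d i.
Hypothesis hP : forall v : 'cV[R]_n, v != 0 -> exists i, v i 0 * (A *m v) i 0 < 0.

Definition zz (x : 'cV[R]_n) := A *m x + u.

Lemma zzE (x : 'cV[R]_n) i : zz x i 0 = (A *m x) i 0 + u i 0.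
Proof. by rewrite /zz [(A *m x + u) i 0]mxE. Qed.

Definition pr (x y : 'cV[R]_n) i := (x i 0 - y i 0) * ((A *m x) i 0 - (A *m y) i 0).

Lemma mono_d (x y : 'cV[R]_n) i : box (d i * x i 0) (zz x i 0) -> box (d i * y i 0) (zz y i 0) ->
  0 <= pr x y i.
Proof.
move=> h1 h2; have := box_mono h1 h2; rewrite !zzE /pr.
have -> : (d i * x i 0 - d i * y i 0) * ((A *m x) i 0 + u i 0 - ((A *m y) i 0 + u i 0))
  = d i * ((x i 0 - y i 0) * ((A *m x) i 0 - (A *m y) i 0)) by ring.
by rewrite pmulr_rge0.
Qed.

Lemma uniq_core (x y : 'cV[R]_n) : (forall i, 0 <= pr x y i) -> x = y.
Proof.
move=> h; apply/eqP; rewrite -subr_eq0; apply/negPn/negP => hne.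
have [i hi] := hP hne.
move: hi; rewrite mulmxBr !mxBE; move: (h i); rewrite /pr; lra.
Qed.

Definition good (S T : {set 'I_n}) (c : 'I_n -> R) (x : 'cV[R]_n) :=
  forall i, if i \in S then box (d i * x i 0) (zz x i 0)
            else if i \in T then d i * x i 0 = c i else zz x i 0 = 0.

Lemma base T c : exists x, good set0 T c x.
Proof.
pose B := \matrix_(i, j) (if i \in T then Dmx d i j else A i j).
pose r := \col_i (if i \in T then c i else - u i 0).
have Bx : forall (x : 'cV[R]_n) i, (B *m x) i 0 = if i \in T then d i * x i 0 else (A *m x) i 0.
  move=> x i; rewrite -(Dmx_mul d x i) [(B *m x) i 0]mxE.
  case: ifP => hi.
    rewrite [(Dmx d *m x) i 0]mxE; apply: eq_bigr => j _; by rewrite mxE hi.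
  rewrite [(A *m x) i 0]mxE; apply: eq_bigr => j _; by rewrite mxE hi.
have hdet : \det B != 0.
  apply/negP; rewrite -det_tr => /det0P [v hv0 hvB].
  have hBw : B *m v^T = 0.
    have : (v *m B^T)^T = 0 by rewrite hvB trmx0.
    by rewrite trmx_mul trmxK.
  have hw0 : v^T != 0.
    apply/eqP => h; apply: (negP hv0); by rewrite -[v]trmxK h trmx0.
  have [i hi] := hP hw0.
  have := congr1 (fun M : 'cV[R]_n => M i 0) hBw; rewrite /= Bx [(0 : 'cV[R]_n) i 0]mxE.
  case: ifP => hiT h.
    move/eqP: h; rewrite mulf_eq0 => /orP [/eqP hd0|/eqP hw].
      by move: (hd i); rewrite hd0 ltxx.
    by move: hi; rewrite hw mul0r ltxx.
  by move: hi; rewrite h mulr0 ltxx.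
have hunit : B \in unitmx by rewrite unitmxE unitfE.
have hx := mulKVmx hunit r.
set x := invmx B *m r in hx *.
exists x => i; rewrite in_set0.
have := congr1 (fun M : 'cV[R]_n => M i 0) hx; rewrite /= Bx [r i 0]mxE.
case: ifP => hiT h //.
by rewrite zzE h addNr.
Qed.


Definition okS (S T : {set 'I_n}) (c : 'I_n -> R) (x : 'cV[R]_n) i :=
  if i \in S then box (d i * x i 0) (zz x i 0)
  else if i \in T then d i * x i 0 = c i else zz x i 0 = 0.

Lemma off_ge0 (S T : {set 'I_n}) c (x y : 'cV[R]_n) i : okS S T c x i -> okS S T c y i -> 0 <= pr x y i.
Proof.
rewrite /okS; case: ifP => hS; first exact: mono_d.
case: ifP => hT hx hy.
- have e : x i 0 = y i 0.
    apply: (mulfI (negbT (gt_eqF (hd i)))); by rewrite hx hy.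
  by rewrite /pr e subrr mul0r.
- rewrite !zzE in hx hy; rewrite /pr.
  have -> : (A *m x) i 0 - (A *m y) i 0 = 0 by lra.
  by rewrite mulr0.
Qed.

Lemma claim k : forall (S T : {set 'I_n}) (c : 'I_n -> R), #|S| = k -> exists x, good S T c x.
Proof.
elim: k => [|k IH] S T c hS.
  rewrite (cards0_eq hS); exact: base.
have [j hj] : exists j, j \in S by apply/set0Pn; rewrite -card_gt0 hS.
have hS' : #|S :\ j| = k by move: hS; rewrite (cardsD1 j S) hj add1n => -[].
have [y0 g0] := IH (S :\ j) (j |: T) (fun i => if i == j then 0 else c i) hS'.
have [y1 g1] := IH (S :\ j) (j |: T) (fun i => if i == j then 1 else c i) hS'.
have [yf gf] := IH (S :\ j) (T :\ j) c hS'.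
have offj : forall (T' : {set 'I_n}) c' x, good (S :\ j) T' c' x ->
    (forall i, i != j -> (i \in T') = (i \in T) /\ c' i = c i) ->
    forall i, i != j -> okS S T c x i.
  move=> T' c' x g hT i hij; have := g i; rewrite /okS in_setD1 hij /=.
  by case: (hT i hij) => -> ->.
have mk : forall x, (forall i, i != j -> okS S T c x i) ->
    box (d j * x j 0) (zz x j 0) -> good S T c x.
  move=> x h hb i; case: (eqVneq i j) => [->|hij]; first by rewrite hj.
  exact: h.
have hTU : forall (a : R) i, i != j ->
    (i \in j |: T) = (i \in T) /\ (if i == j then a else c i) = c i.
  by move=> a i hij; rewrite in_setU1 (negbTE hij).
have hTD : forall i, i != j -> (i \in T :\ j) = (i \in T) /\ c i = c i.
  by move=> i hij; rewrite in_setD1 hij.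
have o0 := offj _ _ _ g0 (hTU 0).
have o1 := offj _ _ _ g1 (hTU 1).
have of' := offj _ _ _ gf hTD.
have e0 : d j * y0 j 0 = 0.
  by have := g0 j; rewrite in_setD1 eqxx in_setU1 eqxx /=.
have e1 : d j * y1 j 0 = 1.
  by have := g1 j; rewrite in_setD1 eqxx in_setU1 eqxx /=.
have ef : zz yf j 0 = 0.
  by have := gf j; rewrite !in_setD1 eqxx.
case: (lerP (zz y0 j 0) 0) => hz0.
  exists y0; apply: mk => //; rewrite e0; split; first by rewrite lexx ler01.
  split => // h; lra.
case: (lerP 0 (zz y1 j 0)) => hz1.
  exists y1; apply: mk => //; rewrite e1; split; first by rewrite lexx ler01.
  split => // h; lra.
exists yf; apply: mk => //; rewrite ef; split; last by rewrite ltxx.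
have pr_off : forall x y, (forall i, i != j -> okS S T c x i) ->
    (forall i, i != j -> okS S T c y i) -> forall i, i != j -> 0 <= pr x y i.
  move=> x y hx hy i hij; exact: off_ge0 (hx i hij) (hy i hij).
apply/andP; split.
  rewrite leNgt; apply/negP => hneg.
  have hyf : yf j 0 < 0 by rewrite -(pmulr_rlt0 _ (hd j)).
  have y00 : y0 j 0 = 0.
    by move/eqP: e0; rewrite mulf_eq0 (gt_eqF (hd j)) => /eqP.
  have : yf = y0.
    apply: uniq_core => i; case: (eqVneq i j) => [->|hij]; last exact: pr_off.
    rewrite /pr y00 subr0.
    have -> : (A *m yf) j 0 - (A *m y0) j 0 = - zz y0 j 0 by move: ef; rewrite !zzE; lra.
    apply: mulr_le0; lra.
  move=> e; move: hneg; by rewrite e e0 ltxx.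
rewrite leNgt; apply/negP => hbig.
have hyf : 0 < yf j 0 - y1 j 0 by rewrite -(pmulr_rgt0 _ (hd j)) mulrBr e1 subr_gt0.
have : yf = y1.
  apply: uniq_core => i; case: (eqVneq i j) => [->|hij]; last exact: pr_off.
  rewrite /pr.
  have -> : (A *m yf) j 0 - (A *m y1) j 0 = - zz y1 j 0 by move: ef; rewrite !zzE; lra.
  apply: mulr_ge0; lra.
move=> e; move: hbig; by rewrite e e1 ltxx.
Qed.

Lemma exists_all : exists x : 'cV[R]_n, forall i, box (d i * x i 0) (zz x i 0).
Proof.
have [x hx] := @claim #|[set: 'I_n]| setT set0 (fun _ => 0) erefl.
exists x => i; by have := hx i; rewrite in_setT.
Qed.

End Exist.



Section Misc.
Variable R : realFieldType.

Lemma pp_form (zv t : R) : ppart zv * (1 - t) + npart zv * t = ppart zv - t * zv.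
Proof. move: (ppart zv) (npart zv) (ppart_npart zv) => p q <-; ring. Qed.

Lemma term_ge0 (zv t : R) : 0 <= t <= 1 -> 0 <= ppart zv * (1 - t) + npart zv * t.
Proof.
move=> /andP [t0 t1]; apply: addr_ge0; apply: mulr_ge0; rewrite ?ppart_ge0 ?npart_ge0 //.
lra.
Qed.

Lemma in_h_term (zv t : R) : in_h zv t -> ppart zv * (1 - t) + npart zv * t = 0.
Proof.
move=> [h1 [h2 h3]]; rewrite ppartE npartE.
case: (ltrgtP zv 0) => hz.
- rewrite h1 // /=; ring.
- rewrite h3 // /=; ring.
- rewrite hz; ring.
Qed.

Lemma term_in_h (zv t : R) : 0 <= t <= 1 ->
  ppart zv * (1 - t) + npart zv * t = 0 -> in_h zv t.
Proof.
move=> /andP [t0 t1]; rewrite ppartE npartE => h.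
split; [|split].
- move=> hz; move: h; rewrite (leNgt 0 zv) hz /= mul0r add0r => /eqP.
  rewrite mulf_eq0 => /orP [/eqP e|/eqP //]; lra.
- by move=> _; rewrite t0 t1.
- move=> hz; move: h; rewrite (ltW hz) mul0r addr0 => /eqP.
  rewrite mulf_eq0 => /orP [/eqP e|/eqP e]; lra.
Qed.

Lemma in_h_box (zv t : R) : in_h zv t -> box t zv.
Proof.
move=> [h1 [h2 h3]]; split; last by split.
case: (ltrgtP zv 0) => hz.
- by rewrite h1 // lexx ler01.
- by rewrite h3 // ler01 lexx.
- exact: h2.
Qed.

Lemma box_in_h (zv t : R) : box t zv -> in_h zv t.
Proof. move=> [h0 [h1 h2]]; split => //; split => // ->; exact: h0. Qed.

End Misc.

Lemma mxDE (R : realFieldType) m p (a b : 'M[R]_(m, p)) i j : (a + b) i j = a i j + b i j.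
Proof. by rewrite !mxE. Qed.

Lemma lds_P (R : realFieldType) n (A : 'M[R]_n) (lam : 'I_n -> R) :
  LDS_cert A lam -> (forall i, 0 < lam i) ->
  forall v : 'cV[R]_n, v != 0 -> exists i, v i 0 * (A *m v) i 0 < 0.
Proof.
move=> hL hl v hv; have := hL v hv.
rewrite mulmxDr mulmxDl mxDE.
have -> : v^T *m (A^T *m Dmx lam) *m v = (A *m v)^T *m Dmx lam *m v
  by rewrite mulmxA trmx_mul.
have -> : v^T *m (Dmx lam *m A) *m v = v^T *m Dmx lam *m (A *m v)
  by rewrite !mulmxA.
rewrite !quadD => hneg.
case: (boolP [exists i, v i 0 * (A *m v) i 0 < 0]) => [/existsP [i hi]|hn].
  by exists i.
exfalso; rewrite negb_exists in hn; move/forallP: hn => hn.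
move: hneg; apply/negP; rewrite -leNgt; apply: addr_ge0; apply: sumr_ge0 => i _.
- have := hn i; rewrite -leNgt => h.
  have -> : (A *m v) i 0 * lam i * v i 0 = lam i * (v i 0 * (A *m v) i 0) by ring.
  by apply: mulr_ge0; [apply: ltW|].
- have := hn i; rewrite -leNgt => h.
  have -> : v i 0 * lam i * (A *m v) i 0 = lam i * (v i 0 * (A *m v) i 0) by ring.
  by apply: mulr_ge0; [apply: ltW|].
Qed.



Lemma term_bound (R : realFieldType) (lam dd zx zy xi yi K Z S : R) :
  0 < lam -> 0 < dd -> `|zx - zy| <= K * S -> `|zx| <= Z -> `|xi - yi| <= S ->
  dd * `|yi| <= 1 ->
  `|lam * (ppart zx - dd * zx * xi) - lam * (ppart zy - dd * zy * yi)|
    <= lam * (K + dd * Z + K) * S.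
Proof.
move=> hl hd h1 h2 h3 h4.
have -> : lam * (ppart zx - dd * zx * xi) - lam * (ppart zy - dd * zy * yi)
  = lam * ((ppart zx - ppart zy) - dd * (zx * (xi - yi) + (zx - zy) * yi)) by ring.
rewrite normrM (gtr0_norm hl) -mulrA; apply: ler_wpM2l; first exact: ltW.
apply: le_trans (ler_normB _ _) _; rewrite normrM (gtr0_norm hd).
have hp := le_trans (ppart_lip zx zy) h1.
have hq : `|zx * (xi - yi) + (zx - zy) * yi| <= Z * S + K * S * `|yi|.
  apply: le_trans (ler_normD _ _) _; rewrite !normrM; apply: lerD; apply: ler_pM => //.
have hKS : 0 <= K * S by apply: le_trans h1.
have hq2 : dd * `|zx * (xi - yi) + (zx - zy) * yi| <= dd * Z * S + K * S.
  apply: le_trans (ler_wpM2l (ltW hd) hq) _.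
  have -> : dd * (Z * S + K * S * `|yi|) = dd * Z * S + K * S * (dd * `|yi|) by ring.
  apply: lerD => //; rewrite -[X in _ <= X]mulr1; exact: ler_wpM2l.
have -> : (K + dd * Z + K) * S = K * S + (dd * Z * S + K * S) by ring.
exact: lerD.
Qed.

Lemma sumB' (R : realFieldType) n (F G : 'I_n -> R) :
  \sum_i F i - \sum_i G i = \sum_i (F i - G i).
Proof. by rewrite sumrB. Qed.

Lemma lipV (R : realFieldType) (n : nat) (d : 'I_n -> R) (W : 'M[R]_n)
    (u : 'cV[R]_n) (lam : 'I_n -> R)
    (hd : forall i, 0 < d i) (hlam : forall i, 0 < lam i) :
  lipschitz_on (inX d) (Vinf W d lam u).
Proof.
pose A := W - Dmx d.
pose K i := \sum_j `|A i j|.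
pose Z i := \sum_j `|A i j| / d j + `|u i 0|.
have K0 : forall i, 0 <= K i by move=> i; apply: sumr_ge0 => j _.
have Z0 : forall i, 0 <= Z i.
  move=> i; apply: addr_ge0 => //; apply: sumr_ge0 => j _.
  apply: divr_ge0 => //; exact: ltW.
exists (\sum_i lam i * (K i + d i * Z i + K i)); split.
  apply: sumr_ge0 => i _; apply: mulr_ge0; first exact: ltW.
  apply: addr_ge0 => //; apply: addr_ge0 => //; apply: mulr_ge0 => //; exact: ltW.
move=> x y hx hy; rewrite !(Vinf_formula _ _ _ hlam). rewrite -(@sumrB _ _ _ _ (fun i => _) (fun i => _)) (@mulr_suml _ _ _ _ (fun i => _)).
set S := \sum_i `|x i 0 - y i 0|.
apply: le_trans (ler_norm_sum _ _ _) _; apply: ler_sum => i _.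
have hS : forall j, `|x j 0 - y j 0| <= S.
  move=> j; exact (@le_sum_term _ _ (fun k => `|x k 0 - y k 0|) j (fun k => normr_ge0 _)).
apply: term_bound => //.
- rewrite -/A !mxDE.
  have -> : (A *m x) i 0 + u i 0 - ((A *m y) i 0 + u i 0) = (A *m (x - y)) i 0.
    by rewrite mulmxBr mxBE; ring.
  rewrite mxE; apply: le_trans (ler_norm_sum _ _ _) _.
  rewrite /K mulr_suml; apply: ler_sum => j _; rewrite normrM.
  apply: ler_wpM2l => //; by rewrite mxBE.
- rewrite -/A mxDE; apply: le_trans (ler_normD _ _) _; rewrite /Z lerD2r.
  rewrite mxE; apply: le_trans (ler_norm_sum _ _ _) _.
  apply: ler_sum => j _; rewrite normrM; apply: ler_wpM2l => //.
  have /andP [h0 h1] := hx j.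
  have xj0 : 0 <= x j 0 by rewrite -(pmulr_rge0 _ (hd j)).
  by rewrite ger0_norm // -[(d j)^-1]mul1r ler_pdivlMr // mulrC.
- have /andP [h0 h1] := hy i.
  by rewrite -(gtr0_norm (hd i)) -normrM ger0_norm.
Qed.

Unset Implicit Arguments. Set Strict Implicit.


Theorem proposition8 (R : realFieldType) (n : nat) (d : 'I_n -> R) (W : 'M[R]_n)
    (u : 'cV[R]_n) (lam : 'I_n -> R)
    (hd : forall i, 0 < d i) (hlam : forall i, 0 < lam i) :
  let A := W - Dmx d in
  let V := Vinf W d lam u in
  (* (i) *)
  (forall x, inX d x ->
     V x = \sum_i lam i * (ppart ((A *m x + u) i 0) * (1 - d i * x i 0)
                          + npart ((A *m x + u) i 0) * (d i * x i 0))
     /\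
     V x = \sum_i lam i * (ppart ((A *m x + u) i 0)
                          - d i * (A *m x + u) i 0 * x i 0)) /\
  (* (ii) *)
  lipschitz_on (inX d) V /\
  (forall x, inX d x -> 0 <= V x) /\
  (* (iii) *)
  (forall x, inX d x -> (V x = 0 <-> equilibrium W d u x)) /\
  (* in particular: Lyapunov diagonal stability with certificate Lambda *)
  (LDS_cert A lam ->
     exists xs : 'cV[R]_n,
       equilibrium W d u xs /\ (forall y, equilibrium W d u y -> y = xs) /\
       inX d xs /\ V xs = 0 /\
       (forall x, inX d x -> x != xs -> 0 < V x)).
Proof.
move=> A V.
have VF : forall x, V x = \sum_i lam i * (ppart ((A *m x + u) i 0)
                          - d i * (A *m x + u) i 0 * x i 0).
  by move=> x; rewrite /V (Vinf_formula _ _ _ hlam).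
have VF1 : forall x, V x = \sum_i lam i * (ppart ((A *m x + u) i 0) * (1 - d i * x i 0)
                          + npart ((A *m x + u) i 0) * (d i * x i 0)).
  move=> x; rewrite VF; apply: eq_bigr => i _; rewrite pp_form; congr (_ * _); ring.
have Vge0 : forall x, inX d x -> 0 <= V x.
  move=> x hx; rewrite VF1; apply: sumr_ge0 => i _; apply: mulr_ge0.
    exact: ltW.
  exact: term_ge0.
have eqE : forall x, equilibrium W d u x ->
    forall i, in_h ((A *m x + u) i 0) (d i * x i 0).
  move=> x [h [hh heq]] i.
  have e : h = Dmx d *m x by apply/eqP; rewrite -subr_eq0 addrC -heq.
  by rewrite -Dmx_mul -e; apply: hh.
have iii : forall x, inX d x -> (V x = 0 <-> equilibrium W d u x).
  move=> x hx; split.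
    move=> h0; exists (Dmx d *m x); split; last by rewrite addNr.
    move=> i; rewrite Dmx_mul; apply: term_in_h; first exact: hx.
    move: h0; rewrite VF1 => h0.
    have hnn : forall j : 'I_n, true -> 0 <= lam j * (ppart ((A *m x + u) j 0) * (1 - d j * x j 0)
                          + npart ((A *m x + u) j 0) * (d j * x j 0)).
      move=> j _; apply: mulr_ge0; [exact: ltW | exact: term_ge0].
    have := @psumr_eq0P _ _ _ _ hnn h0 i isT.
    move/eqP; rewrite mulf_eq0 (gt_eqF (hlam i)) /= => /eqP //.
  move=> he; rewrite VF1; apply: big1 => i _; rewrite in_h_term ?mulr0 //.
  exact: eqE.
have eq_inX : forall x, equilibrium W d u x -> inX d x.
  move=> x he i; have [h0 _] := in_h_box (eqE x he i); exact: h0.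
split; first by move=> x _; split; [exact: VF1 | exact: VF].
split; first exact: lipV.
split; first exact: Vge0.
split; first exact: iii.
move=> hL.
have hP := lds_P hL hlam.
have [xs hxs] := exists_all u hd hP.
have exs : equilibrium W d u xs.
  exists (Dmx d *m xs); split; last by rewrite addNr.
  move=> i; rewrite Dmx_mul; apply: box_in_h; exact: hxs.
have uq : forall y, equilibrium W d u y -> y = xs.
  move=> y hy; apply: (uniq_core hP) => i.
  have b1 := in_h_box (eqE y hy i).
  have b2 := hxs i.
  exact: (mono_d hd b1 b2).
exists xs; split => //; split => //.
have xsX := eq_inX xs exs.
split => //; split; first by apply/iii.
move=> x hx hne; rewrite lt_def Vge0 // andbT; apply/eqP => h0.
by move/eqP: hne; apply; apply: uq; apply/iii.
Qed.
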